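(* For every $\lambda$-calculus value $V$ and variable $x$, writing $I=\lambda z.z$: $\mathcal V'[\![I(xV)]\!]\not\cong_\pi \mathcal V'[\![xV]\!]$ and $\mathcal V[\![I(xV)]\!]\not\cong_\pi\mathcal V[\![xV]\!]$, where $\mathcal V,\mathcal V'$ are Milner's two call-by-value encodings into the $\pi$-calculus and $\cong_\pi$ is barbed congruence in the $\pi$-calculus.
   Context: $\lambda$-terms (possibly open): $M::=x\mid\lambda x.M\mid MM$; values $V::=x\mid\lambda x.M$. $\pi$-calculus: polyadic, well-sorted, with processes $P ::= 0\mid a(\tilde b).P\mid\overline a\langle\tilde b\rangle.P\mid(\nu a)P\mid P|P\mid\ !a(\tilde b).P\mid F\langle\tilde a\rangle$ and abstractions $F::=(\tilde a)P\mid K$ (constants $K\triangleq(\tilde x)P$, $P$ name-closed); $\overline a(y).P$ abbreviates $(\nu y)\overline a\langle y\rangle.P$. Standard operational semantics; $P\Longrightarrow P'$ is a sequence of internal steps, $P\Downarrow_a$ means $P\Longrightarrow P'$ with $P'$ able to perform an output with subject $a$. Barbed bisimilarity $\dot\approx$ is the largest symmetric relation such that $P\dot\approx Q$ implies: $P\Longrightarrow P'$ implies $Q\Longrightarrow Q'$ with $P'\dot\approx Q'$, and $P\Downarrow_a$ iff $Q\Downarrow_a$. Agents $A,B$ are barbed congruent, $A\cong_\pi B$, if $C[A]\dot\approx C[B]$ for all well-sorted $\pi$-contexts $C$. Encodings ($\lambda$-variables are names). $\mathcal V$: $\mathcal V[\![\lambda x.M]\!]=(p)\,\overline p(y).\,!y(x,q).\mathcal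 V[\![M]\!]\langle q\rangle$; $\mathcal V[\![MN]\!]=(p)(\nu q)\big(\mathcal V[\![M]\!]\langle q\rangle\mid q(y).(\nu r)(\mathcal V[\![N]\!]\langle r\rangle\mid r(w).\overline y\langle w,p\rangle)\big)$; $\mathcal V[\![x]\!]=(p)\,\overline p\langle x\rangle$. $\mathcal V'$ is defined by the same clauses for abstraction and application (with $\mathcal V'$ in place of $\mathcal V$), and $\mathcal V'[\![x]\!]=(p)\,\overline p(y).\,!y(z,q).\overline x\langle z,q\rangle$. *)

(* Defs.v *)
From Stdlib Require Import List Arith Relations.
Import ListNotations.

(* A name is a pair (sort, index): every sort has infinitely many names
   (Milner-style sorting: names are partitioned into sorts). *)
Definition name : Type := (nat * nat)%type.
Definition sort_of (a : name) : nat := fst a.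

Definition name_eq_dec : forall a b : name, {a = b} + {a <> b}.
Proof. decide equality; apply Nat.eq_dec. Defined.

Definition inb (a : name) (l : list name) : bool :=
  existsb (fun b => if name_eq_dec a b then true else false) l.

Inductive proc : Type :=
| PNil : proc
| PIn : name -> list name -> proc -> proc
| POut : name -> list name -> proc -> proc
| PNu : name -> proc -> proc
| PPar : proc -> proc -> proc
| PRep : name -> list name -> proc -> proc
| PApp : list name -> proc -> list name -> proc        (* ((x~)P)<b~> *)
| PConst : nat -> list name -> proc.

Definition abs : Type := (list name * proc)%type.

Definition const_env : Type := nat -> abs.

Fixpoint fn (P : proc) : list name :=
  match P with
  | PNil => []
  | PIn a xs Q => a :: filter (fun n => negb (inb n xs)) (fn Q)
  | POut a bs Q => a :: bs ++ fn Q
  | PNu x Q => remove name_eq_dec x (fn Q)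
  | PPar Q R => fn Q ++ fn R
  | PRep a xs Q => a :: filter (fun n => negb (inb n xs)) (fn Q)
  | PApp xs Q bs => filter (fun n => negb (inb n xs)) (fn Q) ++ bs
  | PConst _ bs => bs
  end.

Definition maxidx_names (l : list name) : nat :=
  fold_right (fun a m => Nat.max (snd a) m) 0 l.

Fixpoint maxidx (P : proc) : nat :=
  match P with
  | PNil => 0
  | PIn a xs Q => Nat.max (maxidx_names (a :: xs)) (maxidx Q)
  | POut a bs Q => Nat.max (maxidx_names (a :: bs)) (maxidx Q)
  | PNu x Q => Nat.max (snd x) (maxidx Q)
  | PPar Q R => Nat.max (maxidx Q) (maxidx R)
  | PRep a xs Q => Nat.max (maxidx_names (a :: xs)) (maxidx Q)
  | PApp xs Q bs => Nat.max (maxidx_names (xs ++ bs)) (maxidx Q)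
  | PConst _ bs => maxidx_names bs
  end.

Definition nsubst : Type := list (name * name).

Fixpoint lookup (s : nsubst) (a : name) : name :=
  match s with
  | [] => a
  | (x, y) :: s' => if name_eq_dec x a then y else lookup s' a
  end.

Definition maxidx_sub (s : nsubst) : nat :=
  fold_right (fun p m => Nat.max (Nat.max (snd (fst p)) (snd (snd p))) m) 0 s.

Fixpoint freshen (xs : list name) (f : nat) : list name :=
  match xs with
  | [] => []
  | x :: xs' => (fst x, f) :: freshen xs' (S f)
  end.

(* Capture-avoiding simultaneous substitution: every bound name is renamed
   to a fresh name (of the same sort). *)
Fixpoint subst (s : nsubst) (P : proc) : proc :=
  let f := S (Nat.max (maxidx P) (maxidx_sub s)) in
  match P with
  | PNil => PNil
  | PIn a xs Q =>
      let ys := freshen xs f in PIn (lookup s a) ys (subst (combine xs ys ++ s) Q)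
  | POut a bs Q => POut (lookup s a) (map (lookup s) bs) (subst s Q)
  | PNu x Q => let y := (fst x, f) in PNu y (subst ((x, y) :: s) Q)
  | PPar Q R => PPar (subst s Q) (subst s R)
  | PRep a xs Q =>
      let ys := freshen xs f in PRep (lookup s a) ys (subst (combine xs ys ++ s) Q)
  | PApp xs Q bs =>
      let ys := freshen xs f in
      PApp ys (subst (combine xs ys ++ s) Q) (map (lookup s) bs)
  | PConst k bs => PConst k (map (lookup s) bs)
  end.

Inductive sc (defs : const_env) : proc -> proc -> Prop :=
| sc_refl P : sc defs P P
| sc_sym P Q : sc defs P Q -> sc defs Q P
| sc_trans P Q R : sc defs P Q -> sc defs Q R -> sc defs P R
| sc_in a xs P P' : sc defs P P' -> sc defs (PIn a xs P) (PIn a xs P')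
| sc_out a bs P P' : sc defs P P' -> sc defs (POut a bs P) (POut a bs P')
| sc_nu x P P' : sc defs P P' -> sc defs (PNu x P) (PNu x P')
| sc_par_l P P' Q : sc defs P P' -> sc defs (PPar P Q) (PPar P' Q)
| sc_par_r P Q Q' : sc defs Q Q' -> sc defs (PPar P Q) (PPar P Q')
| sc_rep a xs P P' : sc defs P P' -> sc defs (PRep a xs P) (PRep a xs P')
| sc_app xs P P' bs : sc defs P P' -> sc defs (PApp xs P bs) (PApp xs P' bs)
| sc_alpha_nu x y P :
    sort_of y = sort_of x -> ~ In y (fn (PNu x P)) ->
    sc defs (PNu x P) (PNu y (subst [(x, y)] P))
| sc_alpha_in a xs ys P :
    NoDup ys -> map sort_of ys = map sort_of xs ->
    (forall y, In y ys -> ~ In y (fn (PIn a xs P))) ->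
    sc defs (PIn a xs P) (PIn a ys (subst (combine xs ys) P))
| sc_alpha_rep a xs ys P :
    NoDup ys -> map sort_of ys = map sort_of xs ->
    (forall y, In y ys -> ~ In y (fn (PRep a xs P))) ->
    sc defs (PRep a xs P) (PRep a ys (subst (combine xs ys) P))
| sc_alpha_app xs ys P bs :
    NoDup ys -> map sort_of ys = map sort_of xs ->
    (forall y, In y ys -> ~ In y (fn (PApp xs P []))) ->
    sc defs (PApp xs P bs) (PApp ys (subst (combine xs ys) P) bs)
| sc_par_nil P : sc defs (PPar P PNil) P
| sc_par_comm P Q : sc defs (PPar P Q) (PPar Q P)
| sc_par_assoc P Q R : sc defs (PPar (PPar P Q) R) (PPar P (PPar Q R))
| sc_nu_nil x : sc defs (PNu x PNil) PNil
| sc_nu_swap x y P : sc defs (PNu x (PNu y P)) (PNu y (PNu x P))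
| sc_nu_par x P Q : ~ In x (fn P) -> sc defs (PNu x (PPar P Q)) (PPar P (PNu x Q))
| sc_rep_unfold a xs P : sc defs (PRep a xs P) (PPar (PIn a xs P) (PRep a xs P))
| sc_beta xs P bs :
    length xs = length bs -> sc defs (PApp xs P bs) (subst (combine xs bs) P)
| sc_const k bs :
    length (fst (defs k)) = length bs ->
    sc defs (PConst k bs) (subst (combine (fst (defs k)) bs) (snd (defs k))).

Inductive red (defs : const_env) : proc -> proc -> Prop :=
| red_comm a xs bs P Q :
    length xs = length bs ->
    red defs (PPar (PIn a xs P) (POut a bs Q)) (PPar (subst (combine xs bs) P) Q)
| red_par P P' Q : red defs P P' -> red defs (PPar P Q) (PPar P' Q)
| red_nu x P P' : red defs P P' -> red defs (PNu x P) (PNu x P')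
| red_struct P P' Q Q' :
    sc defs P P' -> red defs P' Q' -> sc defs Q' Q -> red defs P Q.

Definition wred (defs : const_env) : relation proc := clos_refl_trans proc (red defs).

Fixpoint nus (xs : list name) (P : proc) : proc :=
  match xs with [] => P | x :: xs' => PNu x (nus xs' P) end.

Definition barb (defs : const_env) (P : proc) (a : name) : Prop :=
  exists xs bs Q R, sc defs P (nus xs (PPar (POut a bs Q) R)) /\ ~ In a xs.

Definition wbarb (defs : const_env) (P : proc) (a : name) : Prop :=
  exists P', wred defs P P' /\ barb defs P' a.

Definition is_barbed_bisim (defs : const_env) (Rel : proc -> proc -> Prop) : Prop :=
  (forall P Q, Rel P Q -> Rel Q P) /\
  (forall P Q, Rel P Q ->
     (forall P', wred defs P P' -> exists Q', wred defs Q Q' /\ Rel P' Q') /\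
     (forall a, wbarb defs P a <-> wbarb defs Q a)).

Definition barbed_bisimilar (defs : const_env) (P Q : proc) : Prop :=
  exists Rel, is_barbed_bisim defs Rel /\ Rel P Q.

(* A sorting ob assigns to each sort the list of sorts of the objects
   carried by names of that sort. *)
Fixpoint well_sorted (ob : nat -> list nat) (defs : const_env) (P : proc) : Prop :=
  match P with
  | PNil => True
  | PIn a xs Q => NoDup xs /\ map sort_of xs = ob (sort_of a) /\ well_sorted ob defs Q
  | POut a bs Q => map sort_of bs = ob (sort_of a) /\ well_sorted ob defs Q
  | PNu _ Q => well_sorted ob defs Q
  | PPar Q R => well_sorted ob defs Q /\ well_sorted ob defs R
  | PRep a xs Q => NoDup xs /\ map sort_of xs = ob (sort_of a) /\ well_sorted ob defs Q
  | PApp xs Q bs => NoDup xs /\ map sort_of xs = map sort_of bs /\ well_sorted ob defs Q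
  | PConst k bs => map sort_of (fst (defs k)) = map sort_of bs
  end.

Definition defs_ok (ob : nat -> list nat) (defs : const_env) : Prop :=
  forall k, NoDup (fst (defs k)) /\ well_sorted ob defs (snd (defs k)) /\
            (forall n, In n (fn (snd (defs k))) -> In n (fst (defs k))).

(* one-hole contexts; the hole [.]<b~> is filled with an abstraction *)
Inductive ctx : Type :=
| CHole : list name -> ctx
| CIn : name -> list name -> ctx -> ctx
| COut : name -> list name -> ctx -> ctx
| CNu : name -> ctx -> ctx
| CParL : ctx -> proc -> ctx
| CParR : proc -> ctx -> ctx
| CRep : name -> list name -> ctx -> ctx
| CApp : list name -> ctx -> list name -> ctx.

(* filling is textual (may capture names) *)
Fixpoint fill (C : ctx) (F : abs) : proc :=
  match C with
  | CHole bs => PApp (fst F) (snd F) bs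
  | CIn a xs C' => PIn a xs (fill C' F)
  | COut a bs C' => POut a bs (fill C' F)
  | CNu x C' => PNu x (fill C' F)
  | CParL C' Q => PPar (fill C' F) Q
  | CParR Q C' => PPar Q (fill C' F)
  | CRep a xs C' => PRep a xs (fill C' F)
  | CApp xs C' bs => PApp xs (fill C' F) bs
  end.

Definition barbed_congruent (ob : nat -> list nat) (defs : const_env) (A B : abs) : Prop :=
  forall C : ctx,
    well_sorted ob defs (fill C A) -> well_sorted ob defs (fill C B) ->
    barbed_bisimilar defs (fill C A) (fill C B).

Inductive term : Type :=
| Var : nat -> term
| Lam : nat -> term -> term
| App : term -> term -> term.

Definition is_value (M : term) : Prop :=
  match M with App _ _ => False | _ => True end.

Fixpoint maxvar (M : term) : nat :=
  match M with
  | Var x => x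
  | Lam x M' => Nat.max x (maxvar M')
  | App M1 M2 => Nat.max (maxvar M1) (maxvar M2)
  end.

(* sorts: value names (lambda-variables, y, w, z) and location names (p, q, r) *)
Definition sV : nat := 0.
Definition sL : nat := 1.
Definition vname (x : nat) : name := (sV, x).

Definition Iterm : term := Lam 0 (Var 0).

Fixpoint encV (M : term) (p : name) : proc :=
  match M with
  | Var x => POut p [vname x] PNil
  | Lam x M' =>
      let y := vname (S (maxvar M)) in
      let q := (sL, S (snd p)) in
      PNu y (POut p [y] (PRep y [vname x; q] (encV M' q)))
  | App M1 M2 =>
      let q := (sL, S (snd p)) in
      let r := (sL, S (S (snd p))) in
      let y := vname (S (maxvar M)) in
      let w := vname (S (S (maxvar M))) in
      PNu q (PPar (encV M1 q)
                  (PIn q [y] (PNu r (PPar (encV M2 r)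
                                          (PIn r [w] (POut y [w; p] PNil))))))
  end.

Fixpoint encV' (M : term) (p : name) : proc :=
  match M with
  | Var x =>
      let y := vname (S x) in
      let z := vname (S (S x)) in
      let q := (sL, S (snd p)) in
      PNu y (POut p [y] (PRep y [z; q] (POut (vname x) [z; q] PNil)))
  | Lam x M' =>
      let y := vname (S (maxvar M)) in
      let q := (sL, S (snd p)) in
      PNu y (POut p [y] (PRep y [vname x; q] (encV' M' q)))
  | App M1 M2 =>
      let q := (sL, S (snd p)) in
      let r := (sL, S (S (snd p))) in
      let y := vname (S (maxvar M)) in
      let w := vname (S (S (maxvar M))) in
      PNu q (PPar (encV' M1 q)
                  (PIn q [y] (PNu r (PPar (encV' M2 r)
                                          (PIn r [w] (POut y [w; p] PNil))))))
  end.

Definition p0 : name := (sL, 0).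
Definition encVabs (M : term) : abs := ([p0], encV M p0).
Definition encV'abs (M : term) : abs := ([p0], encV' M p0).

(* Main.v *)
Require Import Defs.
From Stdlib Require Import List Arith Lia Relations Permutation.
Import ListNotations.


Lemma inb_iff a l : inb a l = true <-> In a l.
Proof.
  unfold inb. rewrite existsb_exists. split.
  - intros [b [Hb He]]. destruct (name_eq_dec a b); [subst; auto | discriminate].
  - intros H. exists a. split; auto. destruct (name_eq_dec a a); congruence.
Qed.

Lemma in_filt n xs l : In n (filter (fun n => negb (inb n xs)) l) <-> In n l /\ ~ In n xs.
Proof.
  rewrite filter_In. pose proof (inb_iff n xs). destruct (inb n xs); simpl; split; intros [? ?]; split; auto.
  - discriminate.
  - exfalso; apply H1; apply H; auto.
  - intro C; apply H in C; discriminate.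
Qed.

Lemma maxidx_names_in n l : In n l -> snd n <= maxidx_names l.
Proof. induction l; simpl; [tauto|]. intros [H|H]; subst; try lia; specialize (IHl H); lia. Qed.

Lemma maxidx_names_app l1 l2 : maxidx_names (l1 ++ l2) = Nat.max (maxidx_names l1) (maxidx_names l2).
Proof. induction l1; simpl; auto. rewrite IHl1. lia. Qed.

Lemma in_remove_iff x n l : In n (remove name_eq_dec x l) <-> In n l /\ n <> x.
Proof. split; [apply in_remove | intros [? ?]; apply in_in_remove; auto]. Qed.

Lemma fn_maxidx P n : In n (fn P) -> snd n <= maxidx P.
Proof.
  induction P; simpl; intros H; try tauto.
  - destruct H as [H|H]; [subst; lia|]. apply in_filt in H as [H _]. specialize (IHP H); lia.
  - destruct H as [H|H]; [subst; lia|]. apply in_app_or in H as [H|H].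
    + pose proof (maxidx_names_in _ _ H); lia.
    + specialize (IHP H); lia.
  - apply in_remove_iff in H as [H _]. specialize (IHP H); lia.
  - apply in_app_or in H as [H|H]; [specialize (IHP1 H)|specialize (IHP2 H)]; lia.
  - destruct H as [H|H]; [subst; lia|]. apply in_filt in H as [H _]. specialize (IHP H); lia.
  - rewrite maxidx_names_app. apply in_app_or in H as [H|H].
    + apply in_filt in H as [H _]. specialize (IHP H); lia.
    + pose proof (maxidx_names_in _ _ H); lia.
  - apply maxidx_names_in; auto.
Qed.

Lemma lookup_bound s n : snd (lookup s n) <= Nat.max (snd n) (maxidx_sub s).
Proof.
  induction s as [|[a b] s IH]; simpl; [lia|].
  destruct (name_eq_dec a n); lia.
Qed.

Lemma lookup_app_notin l1 l2 n : ~ In n (map fst l1) -> lookup (l1 ++ l2) n = lookup l2 n.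
Proof.
  induction l1 as [|[a b] l1 IH]; simpl; auto. intros H.
  destruct (name_eq_dec a n); [subst; tauto|]. apply IH; tauto.
Qed.

Lemma lookup_app_in l1 l2 n : In n (map fst l1) -> lookup (l1 ++ l2) n = lookup l1 n.
Proof.
  induction l1 as [|[a b] l1 IH]; simpl; [tauto|]. intros H.
  destruct (name_eq_dec a n); auto. apply IH. destruct H; [congruence|auto].
Qed.

Lemma map_fst_combine_sub (xs ys : list name) n : In n (map fst (combine xs ys)) -> In n xs.
Proof.
  revert ys; induction xs; destruct ys; simpl; try tauto. intros [H|H]; eauto.
Qed.

Lemma map_fst_combine (xs ys : list name) : length xs = length ys -> map fst (combine xs ys) = xs.
Proof.
  revert ys; induction xs; destruct ys; simpl; intros; try discriminate; auto. f_equal; auto.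
Qed.

Lemma lookup_combine_notin xs ys n : ~ In n xs -> lookup (combine xs ys) n = n.
Proof.
  revert ys; induction xs; destruct ys; simpl; auto. intros H.
  destruct (name_eq_dec a n); [subst; tauto|]. apply IHxs; tauto.
Qed.

Lemma lookup_combine_in xs ys n : length xs = length ys -> In n xs -> In (lookup (combine xs ys) n) ys.
Proof.
  revert ys; induction xs; destruct ys; simpl; intros; try discriminate; try tauto.
  destruct (name_eq_dec a n); auto. right. apply IHxs; auto. destruct H0; congruence.
Qed.

Lemma freshen_length xs f : length (freshen xs f) = length xs.
Proof. revert f; induction xs; simpl; auto. Qed.

Lemma freshen_ge xs f y : In y (freshen xs f) -> f <= snd y.
Proof. revert f; induction xs; simpl; [tauto|]. intros f [H|H]; [subst; simpl; lia|].
  specialize (IHxs _ H); lia. Qed.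

Lemma freshen_nodup xs f : NoDup (freshen xs f).
Proof.
  revert f; induction xs; simpl; intros; constructor; auto.
  intros H. apply freshen_ge in H. simpl in H. lia.
Qed.

Lemma freshen_sorts xs f : map sort_of (freshen xs f) = map sort_of xs.
Proof. revert f; induction xs; simpl; auto. intros; f_equal; auto. Qed.

Lemma fn_subst P s u : In u (fn (subst s P)) -> exists m, In m (fn P) /\ u = lookup s m.
Proof.
  revert s u; induction P as [|a l P IHP|a l P IHP|a P IHP|P1 IHP1 P2 IHP2|a l P IHP|l P IHP l'|k l]; intros s u H; simpl in H.
  - tauto.
  - destruct H as [H|H]; [exists a; simpl; auto|].
    apply in_filt in H as [H1 H2]. apply IHP in H1 as [m [Hm ->]].
    set (f := S _) in *.
    destruct (In_dec name_eq_dec m l) as [Hin|Hin].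
    + exfalso. apply H2. rewrite lookup_app_in.
      * apply lookup_combine_in; auto. rewrite freshen_length; auto.
      * rewrite map_fst_combine; auto. rewrite freshen_length; auto.
    + rewrite lookup_app_notin. 2:{ intro C; apply Hin; eapply map_fst_combine_sub; eauto. }
      exists m; split; auto. simpl. right. apply in_filt; auto.
  - destruct H as [H|H]; [exists a; simpl; auto|].
    apply in_app_or in H as [H|H].
    + apply in_map_iff in H as [m [<- Hm]]. exists m; simpl; split; auto. right; apply in_or_app; auto.
    + apply IHP in H as [m [Hm ->]]. exists m; simpl; split; auto. right; apply in_or_app; auto.
  - apply in_remove_iff in H as [H1 H2]. apply IHP in H1 as [m [Hm ->]].
    simpl in H2 |- *. destruct (name_eq_dec a m) as [e|ne].
    + subst. tauto.
    + exists m; split; auto. apply in_remove_iff; auto.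
  - apply in_app_or in H as [H|H]; [apply IHP1 in H|apply IHP2 in H]; destruct H as [m [Hm ->]];
      exists m; split; auto; apply in_or_app; auto.
  - destruct H as [H|H]; [exists a; simpl; auto|].
    apply in_filt in H as [H1 H2]. apply IHP in H1 as [m [Hm ->]].
    destruct (In_dec name_eq_dec m l) as [Hin|Hin].
    + exfalso. apply H2. rewrite lookup_app_in.
      * apply lookup_combine_in; auto. rewrite freshen_length; auto.
      * rewrite map_fst_combine; auto. rewrite freshen_length; auto.
    + rewrite lookup_app_notin. 2:{ intro C; apply Hin; eapply map_fst_combine_sub; eauto. }
      exists m; split; auto. simpl. right. apply in_filt; auto.
  - apply in_app_or in H as [H|H].
    + apply in_filt in H as [H1 H2]. apply IHP in H1 as [m [Hm ->]].
      destruct (In_dec name_eq_dec m l) as [Hin|Hin].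
      * exfalso. apply H2. rewrite lookup_app_in.
        -- apply lookup_combine_in; auto. rewrite freshen_length; auto.
        -- rewrite map_fst_combine; auto. rewrite freshen_length; auto.
      * rewrite lookup_app_notin. 2:{ intro C; apply Hin; eapply map_fst_combine_sub; eauto. }
        exists m; split; auto. simpl. apply in_or_app; left. apply in_filt; auto.
    + apply in_map_iff in H as [m [<- Hm]]. exists m; simpl; split; auto. apply in_or_app; auto.
  - apply in_map_iff in H as [m [<- Hm]]. exists m; simpl; auto.
Qed.

Lemma fn_subst_bound P s n : In n (fn (subst s P)) -> snd n <= Nat.max (maxidx P) (maxidx_sub s).
Proof.
  intros H. apply fn_subst in H as [m [Hm ->]].
  pose proof (lookup_bound s m). pose proof (fn_maxidx _ _ Hm). lia.
Qed.


Fixpoint ext (G : name -> nat) (xs : list name) (ts : list nat) (n : name) : nat :=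
  match xs with
  | [] => G n
  | x :: xs' => if name_eq_dec x n then hd 0 ts else ext G xs' (tl ts) n
  end.

Inductive Typ (tbl : nat -> list nat) (defs : const_env) : (name -> nat) -> proc -> Prop :=
| T_nil G : Typ tbl defs G PNil
| T_in_dead G a xs P : G a = 0 -> Typ tbl defs G (PIn a xs P)
| T_in G a xs P : Typ tbl defs (ext G xs (tbl (G a))) P -> Typ tbl defs G (PIn a xs P)
| T_out G a bs P : G a <> 0 -> map G bs = tbl (G a) -> Typ tbl defs G P -> Typ tbl defs G (POut a bs P)
| T_nu G x P t : Typ tbl defs (ext G [x] [t]) P -> Typ tbl defs G (PNu x P)
| T_par G P Q : Typ tbl defs G P -> Typ tbl defs G Q -> Typ tbl defs G (PPar P Q)
| T_rep_dead G a xs P : G a = 0 -> Typ tbl defs G (PRep a xs P)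
| T_rep G a xs P : Typ tbl defs (ext G xs (tbl (G a))) P -> Typ tbl defs G (PRep a xs P)
| T_app G xs P bs : Typ tbl defs (ext G xs (map G bs)) P -> Typ tbl defs G (PApp xs P bs)
| T_const G k bs : Typ tbl defs (ext (fun _ => 0) (fst (defs k)) (map G bs)) (snd (defs k)) ->
    Typ tbl defs G (PConst k bs).

Lemma ext_notin G xs ts n : ~ In n xs -> ext G xs ts n = G n.
Proof.
  revert ts; induction xs; simpl; intros; auto.
  destruct (name_eq_dec a n); [subst; tauto|]. apply IHxs; tauto.
Qed.

Lemma ext_in_indep G G' xs ts n : In n xs -> ext G xs ts n = ext G' xs ts n.
Proof.
  revert ts; induction xs; simpl; intros ts H; [tauto|].
  destruct (name_eq_dec a n); auto. apply IHxs. destruct H; congruence.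
Qed.

Lemma ext_agree_on (l : list name) G G' xs ts :
  (forall n, In n l -> ~ In n xs -> G n = G' n) ->
  forall n, In n l -> ext G xs ts n = ext G' xs ts n.
Proof.
  intros H n Hn. destruct (In_dec name_eq_dec n xs).
  - apply ext_in_indep; auto.
  - rewrite !ext_notin; auto.
Qed.

Lemma ext_combine G G' xs ys ts n :
  NoDup ys -> length xs = length ys -> In n xs ->
  ext G' ys ts (lookup (combine xs ys) n) = ext G xs ts n.
Proof.
  revert ys ts; induction xs as [|x xs IH]; intros [|y ys] ts Hnd Hl Hin; simpl in *; try tauto; try discriminate.
  destruct (name_eq_dec x n).
  - simpl. destruct (name_eq_dec y y); congruence.
  - inversion Hnd; subst. destruct Hin as [Hin|Hin]; [congruence|].
    assert (Hm := lookup_combine_in xs ys n ltac:(lia) Hin).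
    destruct (name_eq_dec y (lookup (combine xs ys) n)); [subst; congruence|].
    apply IH; auto.
Qed.

Lemma ext_map G0 G xs bs n :
  length xs = length bs -> In n xs ->
  ext G0 xs (map G bs) n = G (lookup (combine xs bs) n).
Proof.
  revert bs; induction xs as [|x xs IH]; intros [|b bs] Hl Hin; simpl in *; try tauto; try discriminate.
  destruct (name_eq_dec x n); auto. apply IH; [lia|]. destruct Hin; congruence.
Qed.

Lemma agree_bind xs Q s G G' ts f :
  maxidx Q < f -> maxidx_sub s < f ->
  (forall n, In n (fn Q) -> ~ In n xs -> G' (lookup s n) = G n) ->
  forall n, In n (fn Q) ->
  ext G' (freshen xs f) ts (lookup (combine xs (freshen xs f) ++ s) n) = ext G xs ts n.
Proof.
  intros H1 H2 H n Hn. destruct (In_dec name_eq_dec n xs) as [Hin|Hin].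
  - rewrite lookup_app_in. 2:{ rewrite map_fst_combine; auto. rewrite freshen_length; auto. }
    apply ext_combine; auto. apply freshen_nodup. rewrite freshen_length; auto.
  - rewrite lookup_app_notin. 2:{ intro C; apply Hin; eapply map_fst_combine_sub; eauto. }
    rewrite (ext_notin G); auto. rewrite ext_notin; auto.
    intros C. apply freshen_ge in C. pose proof (lookup_bound s n). pose proof (fn_maxidx _ _ Hn). lia.
Qed.


Lemma Typ_agree tbl defs G P : Typ tbl defs G P -> forall G', (forall n, In n (fn P) -> G n = G' n) ->
  Typ tbl defs G' P.
Proof.
  induction 1; intros G' HG; simpl in HG.
  - constructor.
  - apply T_in_dead. rewrite <- HG; auto.
  - apply T_in. rewrite <- (HG a) by auto. apply IHTyp.
    apply ext_agree_on. intros n Hn Hx. apply HG. right. apply in_filt; auto.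
  - rewrite (HG a) in * by auto. apply T_out; auto.
    + rewrite <- H0. apply map_ext_in. intros. symmetry; apply HG; right; apply in_or_app; auto.
    + apply IHTyp. intros; apply HG; right; apply in_or_app; auto.
  - apply (T_nu _ _ _ _ _ t). apply IHTyp. apply ext_agree_on. intros n Hn Hx. apply HG.
    apply in_remove_iff. split; auto. intro; subst; apply Hx; simpl; auto.
  - constructor; [apply IHTyp1|apply IHTyp2]; intros; apply HG; apply in_or_app; auto.
  - apply T_rep_dead. rewrite <- HG; auto.
  - apply T_rep. rewrite <- (HG a) by auto. apply IHTyp.
    apply ext_agree_on. intros n Hn Hx. apply HG. right. apply in_filt; auto.
  - apply T_app. replace (map G' bs) with (map G bs).
    2:{ apply map_ext_in. intros; apply HG; apply in_or_app; auto. }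
    apply IHTyp. apply ext_agree_on. intros n Hn Hx. apply HG. apply in_or_app; left. apply in_filt; auto.
  - apply T_const. replace (map G' bs) with (map G bs); auto.
    apply map_ext_in. intros; apply HG; auto.
Qed.

Lemma Typ_subst tbl defs P : forall s G G',
  (forall n, In n (fn P) -> G' (lookup s n) = G n) ->
  (Typ tbl defs G P <-> Typ tbl defs G' (subst s P)).
Proof.
  induction P as [|a l P IHP|a l P IHP|a P IHP|P1 IHP1 P2 IHP2|a l P IHP|l P IHP l'|k l];
    intros s G G' HG; simpl in HG |- *.
  - split; constructor.
  - set (f := S _). assert (Hf1 : maxidx P < f) by (unfold f; simpl; lia).
    assert (Hf2 : maxidx_sub s < f) by (unfold f; lia).
    assert (Ha : G' (lookup s a) = G a) by auto.
    assert (Hb : forall ts, Typ tbl defs (ext G l ts) P <->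
       Typ tbl defs (ext G' (freshen l f) ts) (subst (combine l (freshen l f) ++ s) P)).
    { intros ts. apply IHP. intros n Hn. apply agree_bind with (Q := P); auto.
      intros m Hm Hx. apply HG. right. apply in_filt; auto. }
    split; intros H; inversion H; subst.
    + apply T_in_dead; congruence.
    + apply T_in. rewrite Ha. apply Hb; auto.
    + apply T_in_dead; congruence.
    + apply T_in. rewrite <- Ha. apply Hb; auto.
  - assert (Ha : G' (lookup s a) = G a) by auto.
    assert (Hm : map G' (map (lookup s) l) = map G l).
    { rewrite map_map. apply map_ext_in. intros; apply HG; right; apply in_or_app; auto. }
    assert (Hb : Typ tbl defs G P <-> Typ tbl defs G' (subst s P)).
    { apply IHP. intros; apply HG; right; apply in_or_app; auto. }
    split; intros H; inversion H; subst; apply T_out; try congruence; try apply Hb; auto.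
  - set (f := S _). assert (Hf1 : maxidx P < f) by (unfold f; simpl; lia).
    assert (Hf2 : maxidx_sub s < f) by (unfold f; lia).
    assert (Hb : forall t, Typ tbl defs (ext G [a] [t]) P <->
       Typ tbl defs (ext G' (freshen [a] f) [t]) (subst (combine [a] (freshen [a] f) ++ s) P)).
    { intros t. apply IHP. intros n Hn. apply agree_bind with (Q := P); auto.
      intros m Hm Hx. apply HG. apply in_remove_iff. split; auto. intro; subst; apply Hx; simpl; auto. }
    simpl in Hb.
    split; intros H; inversion H; subst; apply (T_nu _ _ _ _ _ t); apply Hb; auto.
  - assert (H1 : Typ tbl defs G P1 <-> Typ tbl defs G' (subst s P1)).
    { apply IHP1. intros; apply HG; apply in_or_app; auto. }
    assert (H2 : Typ tbl defs G P2 <-> Typ tbl defs G' (subst s P2)).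
    { apply IHP2. intros; apply HG; apply in_or_app; auto. }
    split; intros H; inversion H; subst; constructor; try apply H1; try apply H2; auto.
  - set (f := S _). assert (Hf1 : maxidx P < f) by (unfold f; simpl; lia).
    assert (Hf2 : maxidx_sub s < f) by (unfold f; lia).
    assert (Ha : G' (lookup s a) = G a) by auto.
    assert (Hb : forall ts, Typ tbl defs (ext G l ts) P <->
       Typ tbl defs (ext G' (freshen l f) ts) (subst (combine l (freshen l f) ++ s) P)).
    { intros ts. apply IHP. intros n Hn. apply agree_bind with (Q := P); auto.
      intros m Hm Hx. apply HG. right. apply in_filt; auto. }
    split; intros H; inversion H; subst.
    + apply T_rep_dead; congruence.
    + apply T_rep. rewrite Ha. apply Hb; auto.
    + apply T_rep_dead; congruence.
    + apply T_rep. rewrite <- Ha. apply Hb; auto.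
  - set (f := S _). assert (Hf1 : maxidx P < f) by (unfold f; simpl; lia).
    assert (Hf2 : maxidx_sub s < f) by (unfold f; lia).
    assert (Hm : map G' (map (lookup s) l') = map G l').
    { rewrite map_map. apply map_ext_in. intros; apply HG; apply in_or_app; auto. }
    assert (Hb : forall ts, Typ tbl defs (ext G l ts) P <->
       Typ tbl defs (ext G' (freshen l f) ts) (subst (combine l (freshen l f) ++ s) P)).
    { intros ts. apply IHP. intros n Hn. apply agree_bind with (Q := P); auto.
      intros m Hm' Hx. apply HG. apply in_or_app; left. apply in_filt; auto. }
    split; intros H; inversion H; subst; apply T_app.
    + rewrite Hm. apply Hb; auto.
    + rewrite <- Hm. apply Hb; auto.
  - assert (Hm : map G' (map (lookup s) l) = map G l).
    { rewrite map_map. apply map_ext_in. intros; apply HG; auto. }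
    split; intros H; inversion H; subst; apply T_const; congruence.
Qed.

Lemma inv_nu tbl defs G x P : Typ tbl defs G (PNu x P) -> exists t, Typ tbl defs (ext G [x] [t]) P.
Proof. intros H; inversion H; subst; eauto. Qed.
Lemma inv_par tbl defs G P Q : Typ tbl defs G (PPar P Q) -> Typ tbl defs G P /\ Typ tbl defs G Q.
Proof. intros H; inversion H; subst; auto. Qed.
Lemma inv_in tbl defs G a xs P : Typ tbl defs G (PIn a xs P) -> G a = 0 \/ Typ tbl defs (ext G xs (tbl (G a))) P.
Proof. intros H; inversion H; subst; auto. Qed.
Lemma inv_rep tbl defs G a xs P : Typ tbl defs G (PRep a xs P) -> G a = 0 \/ Typ tbl defs (ext G xs (tbl (G a))) P.
Proof. intros H; inversion H; subst; auto. Qed.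
Lemma inv_out tbl defs G a bs P : Typ tbl defs G (POut a bs P) -> G a <> 0 /\ map G bs = tbl (G a) /\ Typ tbl defs G P.
Proof. intros H; inversion H; subst; auto. Qed.
Lemma inv_app tbl defs G xs P bs : Typ tbl defs G (PApp xs P bs) -> Typ tbl defs (ext G xs (map G bs)) P.
Proof. intros H; inversion H; subst; auto. Qed.


Lemma alpha_agree G xs ys ts P (L : list name) :
  NoDup ys -> length xs = length ys -> (forall y, In y ys -> ~ In y L) ->
  (forall n, In n (fn P) -> ~ In n xs -> In n L) ->
  forall n, In n (fn P) -> ext G ys ts (lookup (combine xs ys) n) = ext G xs ts n.
Proof.
  intros Hnd Hl Hy HL n Hn. destruct (In_dec name_eq_dec n xs).
  - apply ext_combine; auto.
  - rewrite lookup_combine_notin; auto. rewrite !ext_notin; auto.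
    intro C. apply (Hy n C). auto.
Qed.

Lemma beta_typ tbl defs G xs bs P : length xs = length bs ->
  (Typ tbl defs (ext G xs (map G bs)) P <-> Typ tbl defs G (subst (combine xs bs) P)).
Proof.
  intros Hl. apply Typ_subst. intros n Hn. destruct (In_dec name_eq_dec n xs).
  - rewrite ext_map; auto.
  - rewrite lookup_combine_notin, ext_notin; auto.
Qed.

Lemma map_sort_len (xs ys : list name) : map sort_of ys = map sort_of xs -> length xs = length ys.
Proof. intros H. rewrite <- (length_map sort_of xs), <- (length_map sort_of ys). congruence. Qed.

Lemma nu_swap_dir tbl defs G x y P : Typ tbl defs G (PNu x (PNu y P)) -> Typ tbl defs G (PNu y (PNu x P)).
Proof.
  intros H. apply inv_nu in H as [t H]. apply inv_nu in H as [t0 H].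
  destruct (name_eq_dec x y).
  - subst. apply (T_nu _ _ _ _ _ t0). apply (T_nu _ _ _ _ _ t0).
    eapply Typ_agree; eauto. intros n _. simpl. destruct (name_eq_dec y n); auto.
  - apply (T_nu _ _ _ _ _ t0). apply (T_nu _ _ _ _ _ t).
    eapply Typ_agree; eauto. intros m _. simpl.
    destruct (name_eq_dec y m); destruct (name_eq_dec x m); subst; congruence.
Qed.

Lemma Typ_sc tbl ob defs : defs_ok ob defs -> forall P Q, sc defs P Q ->
  forall G, Typ tbl defs G P <-> Typ tbl defs G Q.
Proof.
  intros Hdefs. induction 1; intros G.
  - tauto.
  - symmetry; auto.
  - rewrite IHsc1; auto.
  - split; intros H'; apply inv_in in H' as [H'|H']; [apply T_in_dead; auto|apply T_in; apply IHsc; auto|apply T_in_dead; auto|apply T_in; apply IHsc; auto].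
  - split; intros H'; apply inv_out in H' as [? [? ?]]; apply T_out; auto; apply IHsc; auto.
  - split; intros H'; apply inv_nu in H' as [t H']; apply (T_nu _ _ _ _ _ t); apply IHsc; auto.
  - split; intros H'; apply inv_par in H' as [? ?]; constructor; auto; apply IHsc; auto.
  - split; intros H'; apply inv_par in H' as [? ?]; constructor; auto; apply IHsc; auto.
  - split; intros H'; apply inv_rep in H' as [H'|H']; [apply T_rep_dead; auto|apply T_rep; apply IHsc; auto|apply T_rep_dead; auto|apply T_rep; apply IHsc; auto].
  - split; intros H'; apply inv_app in H'; apply T_app; apply IHsc; auto.
  -
    assert (Hb : forall t, Typ tbl defs (ext G [x] [t]) P <-> Typ tbl defs (ext G [y] [t]) (subst [(x, y)] P)).
    { intros t. apply Typ_subst. intros n Hn. simpl.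
      destruct (name_eq_dec x n).
      - destruct (name_eq_dec y y); congruence.
      - destruct (name_eq_dec y n); auto. subst. exfalso. apply H0. simpl. apply in_remove_iff; auto. }
    split; intros H'; apply inv_nu in H' as [t H']; apply (T_nu _ _ _ _ _ t); apply Hb; auto.
  -
    assert (Hb : forall ts, Typ tbl defs (ext G xs ts) P <-> Typ tbl defs (ext G ys ts) (subst (combine xs ys) P)).
    { intros ts. apply Typ_subst. apply alpha_agree with (L := fn (PIn a xs P)); auto.
      - apply map_sort_len; auto.
      - intros n Hn Hx. simpl. right. apply in_filt; auto. }
    split; intros H'; apply inv_in in H' as [H'|H']; [apply T_in_dead; auto|apply T_in; apply Hb; auto|apply T_in_dead; auto|apply T_in; apply Hb; auto].
  - assert (Hb : forall ts, Typ tbl defs (ext G xs ts) P <-> Typ tbl defs (ext G ys ts) (subst (combine xs ys) P)).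
    { intros ts. apply Typ_subst. apply alpha_agree with (L := fn (PRep a xs P)); auto.
      - apply map_sort_len; auto.
      - intros n Hn Hx. simpl. right. apply in_filt; auto. }
    split; intros H'; apply inv_rep in H' as [H'|H']; [apply T_rep_dead; auto|apply T_rep; apply Hb; auto|apply T_rep_dead; auto|apply T_rep; apply Hb; auto].
  - assert (Hb : forall ts, Typ tbl defs (ext G xs ts) P <-> Typ tbl defs (ext G ys ts) (subst (combine xs ys) P)).
    { intros ts. apply Typ_subst. apply alpha_agree with (L := fn (PApp xs P [])); auto.
      - apply map_sort_len; auto.
      - intros n Hn Hx. simpl. apply in_or_app; left. apply in_filt; auto. }
    split; intros H'; apply inv_app in H'; apply T_app; apply Hb; auto.
  - split; intros H'; [apply inv_par in H'; tauto | constructor; auto; constructor].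
  - split; intros H'; apply inv_par in H' as [? ?]; constructor; auto.
  - split; intros H'.
    + apply inv_par in H' as [K1 K2]. apply inv_par in K1 as [K1 K3]. repeat constructor; auto.
    + apply inv_par in H' as [K1 K2]. apply inv_par in K2 as [K2 K3]. repeat constructor; auto.
  - split; intros H'; [constructor| apply (T_nu _ _ _ _ _ 0); constructor].
  - split; apply nu_swap_dir.
  - split; intros H'.
    + apply inv_nu in H' as [t H']. apply inv_par in H' as [K1 K2]. constructor.
      * eapply Typ_agree; eauto. intros n Hn. simpl. destruct (name_eq_dec x n); subst; tauto.
      * apply (T_nu _ _ _ _ _ t); auto.
    + apply inv_par in H' as [K1 K2]. apply inv_nu in K2 as [t K2]. apply (T_nu _ _ _ _ _ t). constructor; auto.
      eapply Typ_agree; eauto. intros n Hn. simpl. destruct (name_eq_dec x n); subst; tauto.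
  - split; intros H'.
    + apply inv_rep in H' as [H'|H']; apply T_par.
      * apply T_in_dead; auto.
      * apply T_rep_dead; auto.
      * apply T_in; auto.
      * apply T_rep; auto.
    + apply inv_par in H' as [H1 H2]. apply inv_in in H1 as [H1|H1]; [apply T_rep_dead|apply T_rep]; auto.
  - split; intros H'.
    + apply inv_app in H'. apply beta_typ; auto.
    + apply T_app. apply beta_typ; auto.
  - destruct (Hdefs k) as [_ [_ Hfn]].
    assert (Hb : Typ tbl defs (ext (fun _ => 0) (fst (defs k)) (map G bs)) (snd (defs k)) <->
                 Typ tbl defs G (subst (combine (fst (defs k)) bs) (snd (defs k)))).
    { apply Typ_subst. intros n Hn. rewrite ext_map; auto. }
    split; intros H'; [inversion H'; subst; apply Hb; auto | apply T_const; apply Hb; auto].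
Qed.

Lemma Typ_red tbl ob defs : defs_ok ob defs -> forall P Q, red defs P Q ->
  forall G, Typ tbl defs G P -> Typ tbl defs G Q.
Proof.
  intros Hdefs. induction 1; intros G HT.
  - apply inv_par in HT as [H1 H2]. apply inv_out in H2 as [H3 [H4 H5]].
    apply inv_in in H1 as [H1|H1]; [congruence|].
    constructor; auto. apply beta_typ; auto. rewrite H4; auto.
  - apply inv_par in HT as [? ?]. constructor; auto.
  - apply inv_nu in HT as [t HT]. apply (T_nu _ _ _ _ _ t). auto.
  - apply (Typ_sc tbl ob defs Hdefs _ _ H1). apply IHred. apply (Typ_sc tbl ob defs Hdefs _ _ H). auto.
Qed.

Lemma Typ_nus tbl defs o bs Q R : forall xs G, Typ tbl defs G (nus xs (PPar (POut o bs Q) R)) ->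
  ~ In o xs -> G o <> 0.
Proof.
  induction xs; simpl; intros G H Hn.
  - apply inv_par in H as [H _]. apply inv_out in H; tauto.
  - apply inv_nu in H as [t H]. apply IHxs in H; auto. simpl in H.
    destruct (name_eq_dec a o); [subst; tauto|auto].
Qed.

Lemma no_wbarb tbl ob defs G P o : defs_ok ob defs -> Typ tbl defs G P -> G o = 0 -> ~ wbarb defs P o.
Proof.
  intros Hd HT Ho [P' [Hw [xs [bs [Q [R [Hsc Hn]]]]]]].
  assert (HT' : Typ tbl defs G P').
  { clear Hsc Hn. induction Hw; auto. eapply Typ_red; eauto. }
  apply (Typ_sc tbl ob defs Hd _ _ Hsc) in HT'.
  apply Typ_nus in HT'; auto.
Qed.


Fixpoint pars (l : list proc) : proc :=
  match l with [] => PNil | P :: l' => PPar P (pars l') end.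

Lemma sc_pars_perm defs l l' : Permutation l l' -> sc defs (pars l) (pars l').
Proof.
  induction 1; simpl.
  - apply sc_refl.
  - apply sc_par_r; auto.
  - eapply sc_trans. apply sc_sym, sc_par_assoc.
    eapply sc_trans. apply sc_par_l, sc_par_comm. apply sc_par_assoc.
  - eapply sc_trans; eauto.
Qed.

Lemma sc_nus defs ns P Q : sc defs P Q -> sc defs (nus ns P) (nus ns Q).
Proof. induction ns; simpl; auto. intros; apply sc_nu; auto. Qed.

Lemma red_nus defs ns P Q : red defs P Q -> red defs (nus ns P) (nus ns Q).
Proof. induction ns; simpl; auto. intros; apply red_nu; auto. Qed.

Lemma nus_app ns y P : nus (ns ++ [y]) P = nus ns (PNu y P).
Proof. induction ns; simpl; congruence. Qed.

Lemma wbarb_sc defs P Q o : sc defs P Q -> wbarb defs Q o -> wbarb defs P o.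
Proof.
  intros H [Q' [Hw Hb]]. apply clos_rt_rt1n in Hw. destruct Hw.
  - exists P. split; [apply rt_refl|]. destruct Hb as [xs [bs [R [S [H1 H2]]]]].
    exists xs, bs, R, S. split; auto. eapply sc_trans; eauto.
  - exists z. split; auto. eapply rt_trans; [apply rt_step|].
    + eapply red_struct; [exact H| exact H0| apply sc_refl].
    + apply clos_rt1n_rt; auto.
Qed.

Lemma wbarb_red defs P Q o : red defs P Q -> wbarb defs Q o -> wbarb defs P o.
Proof.
  intros H [Q' [Hw Hb]]. exists Q'. split; auto. eapply rt_trans; [apply rt_step|]; eauto.
Qed.

Fixpoint del (i : nat) (l : list proc) : list proc :=
  match i, l with
  | 0, _ :: l' => l'
  | S i', P :: l' => P :: del i' l'
  | _, [] => []
  end.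

Lemma pick_perm i l : i < length l -> Permutation l (nth i l PNil :: del i l).
Proof.
  revert l; induction i; intros [|P l] H; simpl in *; try lia.
  - apply Permutation_refl.
  - eapply perm_trans; [apply perm_skip, IHi; lia|]. apply perm_swap.
Qed.

Lemma wbarb_pick defs ns l o i : i < length l ->
  wbarb defs (nus ns (pars (nth i l PNil :: del i l))) o -> wbarb defs (nus ns (pars l)) o.
Proof. intros H. apply wbarb_sc. apply sc_nus, sc_pars_perm, pick_perm; auto. Qed.

Lemma wbarb_flat defs ns A B l o :
  wbarb defs (nus ns (pars (A :: B :: l))) o -> wbarb defs (nus ns (pars (PPar A B :: l))) o.
Proof. apply wbarb_sc. apply sc_nus. simpl. apply sc_par_assoc. Qed.

Lemma wbarb_beta defs ns xs P bs l o : length xs = length bs ->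
  wbarb defs (nus ns (pars (subst (combine xs bs) P :: l))) o -> wbarb defs (nus ns (pars (PApp xs P bs :: l))) o.
Proof. intros H. apply wbarb_sc. apply sc_nus. simpl. apply sc_par_l, sc_beta; auto. Qed.

Lemma wbarb_rep defs ns a xs P l o :
  wbarb defs (nus ns (pars (PIn a xs P :: PRep a xs P :: l))) o -> wbarb defs (nus ns (pars (PRep a xs P :: l))) o.
Proof.
  apply wbarb_sc. apply sc_nus. simpl. eapply sc_trans; [apply sc_par_l, sc_rep_unfold|]. apply sc_par_assoc.
Qed.

Lemma wbarb_comm defs ns a xs P bs Q l o : length xs = length bs ->
  wbarb defs (nus ns (pars (subst (combine xs bs) P :: Q :: l))) o ->
  wbarb defs (nus ns (pars (PIn a xs P :: POut a bs Q :: l))) o.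
Proof.
  intros H. apply wbarb_red. apply red_nus. simpl.
  eapply red_struct; [apply sc_sym, sc_par_assoc| |apply sc_par_assoc].
  apply red_par. apply red_comm; auto.
Qed.

Lemma wbarb_extrude defs ns x P l o : ~ In x (fn (pars l)) ->
  wbarb defs (nus (ns ++ [x]) (pars (P :: l))) o -> wbarb defs (nus ns (pars (PNu x P :: l))) o.
Proof.
  intros H. rewrite nus_app. apply wbarb_sc. apply sc_nus. simpl.
  eapply sc_trans; [apply sc_par_comm|]. eapply sc_trans; [apply sc_sym, sc_nu_par; auto|].
  apply sc_nu, sc_par_comm.
Qed.

Lemma notin_idx P n : maxidx P < snd n -> ~ In n (fn P).
Proof. intros H C. apply fn_maxidx in C. lia. Qed.

Lemma wbarb_alpha defs ns x P l o k : maxidx (pars (PNu x P :: l)) < k ->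
  wbarb defs (nus (ns ++ [(fst x, k)]) (pars (subst [(x, (fst x, k))] P :: l))) o ->
  wbarb defs (nus ns (pars (PNu x P :: l))) o.
Proof.
  intros Hk H. apply wbarb_sc with (Q := nus ns (pars (PNu (fst x, k) (subst [(x, (fst x, k))] P) :: l))).
  - apply sc_nus. simpl. apply sc_par_l. apply sc_alpha_nu; auto.
    apply notin_idx. simpl in *. lia.
  - apply wbarb_extrude; auto. apply notin_idx. simpl in *. lia.
Qed.

Lemma barb_final defs ns o bs Q l : ~ In o ns -> wbarb defs (nus ns (pars (POut o bs Q :: l))) o.
Proof.
  intros H. exists (nus ns (pars (POut o bs Q :: l))). split; [apply rt_refl|].
  exists ns, bs, Q, (pars l). split; auto. apply sc_refl.
Qed.

Lemma maxidx_pars_cons P l : maxidx (pars (P :: l)) = Nat.max (maxidx P) (maxidx (pars l)).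
Proof. reflexivity. Qed.
Lemma maxidx_pars_nil : maxidx (pars []) = 0.
Proof. reflexivity. Qed.


Arguments name_eq_dec : simpl never.

Ltac dec := repeat match goal with |- context [name_eq_dec ?a ?b] =>
  let H := fresh "E" in destruct (name_eq_dec a b) as [H|H];
    [try (exfalso; injection H; intros; lia) | try (exfalso; apply H; reflexivity)] end.

Definition Xn (x : nat) := vname x.
Definition On (x : nat) := vname (S x).
Definition Rcv (x : nat) : proc :=
  PIn (vname x) [vname 0; (sL, 1)] (PIn (sL, 1) [vname 0] (POut (On x) [On x; p0] PNil)).
Definition Pp (x : nat) : proc := POut p0 [On x] PNil.
Definition Ctx (x : nat) : proc := PPar (Rcv x) (Pp x).
Definition CC (x : nat) : ctx := CParL (CHole [p0]) (Ctx x).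

Definition Gm (x : nat) (n : name) : nat :=
  if name_eq_dec n (vname x) then 1 else if name_eq_dec n p0 then 3 else 0.
Definition tbl_a (n : nat) : list nat :=
  match n with 1 => [0;0] | 2 => [1] | 3 => [0] | _ => [] end.
Definition tbl_b (n : nat) : list nat :=
  match n with 1 => [1;0] | 2 => [1] | 3 => [0] | _ => [] end.

Lemma typ_ctx tbl defs x : tbl 1 = [0;0] \/ tbl 1 = [1;0] -> tbl 3 = [0] -> Typ tbl defs (Gm x) (Ctx x).
Proof.
  intros H1 H3. unfold Ctx, Rcv, Pp, On, Gm. apply T_par.
  - apply T_in. simpl. dec. destruct H1 as [-> | ->]; apply T_in_dead; simpl; dec; auto.
  - apply T_out; simpl; dec; try rewrite H3; auto; constructor.
Qed.

Lemma typ_I' tbl defs x V : tbl = tbl_a -> is_value V ->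
  Typ tbl defs (Gm x) (PPar (PApp [p0] (encV' (App Iterm (App (Var x) V)) p0) [p0]) (Ctx x)).
Proof.
  intros -> HV. apply T_par; [|apply typ_ctx; auto].
  apply T_app. unfold Gm. simpl. dec.
  apply (T_nu _ _ _ _ _ 3). apply T_par.
  - apply (T_nu _ _ _ _ _ 0). apply T_out; simpl; dec; auto. apply T_rep_dead. simpl; dec; auto.
  - apply T_in. simpl. dec. apply (T_nu _ _ _ _ _ 0). apply T_par.
    + apply (T_nu _ _ _ _ _ 2). apply T_par.
      * apply (T_nu _ _ _ _ _ 1). apply T_out; simpl; dec; auto.
        apply T_rep. simpl; dec. apply T_out; simpl; dec; auto. constructor.
      * apply T_in. simpl; dec. apply (T_nu _ _ _ _ _ 3). apply T_par.
        -- destruct V as [v|v M|]; simpl in HV; try tauto; simpl;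
           apply (T_nu _ _ _ _ _ 0); apply T_out; simpl; dec; auto; apply T_rep_dead; simpl; dec; auto.
        -- apply T_in. simpl; dec. apply T_out; simpl; dec; auto. constructor.
    + apply T_in_dead. simpl; dec; auto.
Qed.

Definition tbl_for (x : nat) (V : term) : nat -> list nat :=
  match V with Var v => if Nat.eqb v x then tbl_b else tbl_a | _ => tbl_a end.

Lemma typ_I defs x V : is_value V ->
  Typ (tbl_for x V) defs (Gm x) (PPar (PApp [p0] (encV (App Iterm (App (Var x) V)) p0) [p0]) (Ctx x)).
Proof.
  intros HV.
  assert (Ht : (tbl_for x V 1 = [0;0] \/ tbl_for x V 1 = [1;0]) /\ tbl_for x V 2 = [1] /\ tbl_for x V 3 = [0]).
  { destruct V; simpl; auto. destruct (Nat.eqb n x); simpl; auto. }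
  destruct Ht as [Ht1 [Ht2 Ht3]].
  apply T_par; [|apply typ_ctx; auto].
  apply T_app. unfold Gm. simpl. dec.
  apply (T_nu _ _ _ _ _ 3). apply T_par.
  - apply (T_nu _ _ _ _ _ 0). apply T_out; simpl; dec; try rewrite Ht3; auto. apply T_rep_dead. simpl; dec; auto.
  - apply T_in. simpl. dec. rewrite Ht3. apply (T_nu _ _ _ _ _ 0). apply T_par.
    + apply (T_nu _ _ _ _ _ 2). apply T_par.
      * apply T_out; simpl; dec; try rewrite Ht2; auto. constructor.
      * apply T_in. simpl; dec. rewrite Ht2.
        destruct V as [v|v M|]; simpl in HV; try tauto.
        -- destruct (Nat.eqb_spec v x).
           ++ subst v. simpl in *. rewrite Nat.eqb_refl in *.
              apply (T_nu _ _ _ _ _ 2). apply T_par.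
              ** apply T_out; simpl; dec; auto. constructor.
              ** apply T_in. simpl; dec. apply T_out; simpl; dec; auto. constructor.
           ++ simpl in *. rewrite (proj2 (Nat.eqb_neq v x) n) in *.
              apply (T_nu _ _ _ _ _ 3). apply T_par.
              ** apply T_out; simpl; dec; auto. constructor.
              ** apply T_in. simpl; dec. apply T_out; simpl; dec; auto. constructor.
        -- simpl in *. apply (T_nu _ _ _ _ _ 3). apply T_par.
           ++ apply (T_nu _ _ _ _ _ 0). apply T_out; simpl; dec; auto. apply T_rep_dead. simpl; dec; auto.
           ++ apply T_in. simpl; dec. apply T_out; simpl; dec; auto. constructor.
    + apply T_in_dead. simpl; dec; auto.
Qed.


Arguments Nat.max : simpl never.
Arguments nus : simpl never.
Arguments pars : simpl never.

Definition Egen' x m yv J :=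
 PNu (sL,1) (PPar (encV' (Var x) (sL,1)) (PIn (sL,1) [vname (S m)] (PNu (sL,2) (PPar (PNu yv (POut (sL,2) [yv] J)) (PIn (sL,2) [vname (S (S m))] (POut (vname (S m)) [vname (S (S m)); p0] PNil)))))).

Ltac dec2 := repeat match goal with |- context [name_eq_dec ?a ?b] =>
  let H := fresh "E" in destruct (name_eq_dec a b) as [H|H];
    [try (exfalso; injection H; intros; lia); try clear H | try (exfalso; apply H; reflexivity); try clear H] end.
Lemma ml t a b : t <= a -> t <= Nat.max a b. Proof. lia. Qed.
Lemma mr t a b : t <= b -> t <= Nat.max a b. Proof. lia. Qed.
Ltac prove_le := first [exact (Nat.le_refl _) | apply ml; prove_le | apply mr; prove_le].
Ltac add_leaves Hk k e := lazymatch e with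
  | Nat.max ?a ?b => add_leaves Hk k a; add_leaves Hk k b
  | 0 => idtac
  | _ => let L := fresh "L" in assert (L : e < k) by (rewrite Hk; apply le_n_S; prove_le)
  end.
Ltac add_leaves_eq Hk := lazymatch type of Hk with ?k = S ?e => add_leaves Hk k e end.
Ltac abs_idx := repeat match goal with |- context [ (?s0, S (Nat.max ?a ?b)) ] =>
  let k := fresh "k" in let Hk := fresh "Hk" in remember (S (Nat.max a b)) as k eqn:Hk;
  add_leaves_eq Hk; clear Hk end.

Ltac pick i := apply (wbarb_pick _ _ _ _ i); [simpl; lia|]; cbn [nth del].
Ltac comm := apply wbarb_comm; [reflexivity|]; simpl; dec2; abs_idx.
Ltac alpha := match goal with |- wbarb _ (nus _ (pars ?l)) _ => apply (wbarb_alpha _ _ _ _ _ _ (S (maxidx (pars l)))); [lia|] end;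
  let ky := fresh "ky" in let Hky := fresh "Hky" in
  match goal with |- context [S (maxidx ?P)] => remember (S (maxidx P)) as ky eqn:Hky end;
  rewrite ?maxidx_pars_cons, ?maxidx_pars_nil in Hky; simpl in Hky; add_leaves_eq Hky; clear Hky;
  simpl; dec2; abs_idx.

Lemma start defs x A o : wbarb defs (nus [] (pars [A; Rcv x; Pp x])) o -> wbarb defs (PPar A (Ctx x)) o.
Proof. apply wbarb_sc. simpl. apply sc_par_r. apply sc_par_r. apply sc_sym, sc_par_nil. Qed.

Lemma pos_V' defs x m yv J : x <= m -> fst yv = sV ->
  wbarb defs (PPar (PApp [p0] (Egen' x m yv J) [p0]) (Ctx x)) (On x).
Proof.
  intros Hm Hyv. destruct yv as [sy iy]. simpl in Hyv. subst sy. apply start. apply wbarb_beta; [reflexivity|].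
  unfold Egen', Rcv, Pp, On. simpl. dec2. abs_idx.
  apply wbarb_extrude. { apply notin_idx. rewrite ?maxidx_pars_cons, ?maxidx_pars_nil. simpl. lia. }
  simpl. apply wbarb_flat.
  match goal with |- wbarb _ (nus _ (pars ?l)) _ => apply (wbarb_alpha _ _ _ _ _ _ (S (maxidx (pars l)))); [lia|] end.
  match goal with |- context [S (maxidx ?P)] => remember (S (maxidx P)) as ky eqn:Hky end.
  rewrite ?maxidx_pars_cons, ?maxidx_pars_nil in Hky. simpl in Hky. add_leaves_eq Hky. clear Hky.
  simpl. dec2. abs_idx.
  pick 1. comm. alpha. apply wbarb_flat. alpha.
  pick 1. comm.
  pick 2. apply wbarb_rep. pick 2. pick 1. comm.
  pick 4. comm. pick 5. pick 1. comm.
  apply barb_final. simpl. intros C; repeat destruct C as [C|C]; try injection C; try lia; auto.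
Qed.

Definition Egen x m yv J :=
 PNu (sL,1) (PPar (POut (sL,1) [vname x] PNil) (PIn (sL,1) [vname (S m)] (PNu (sL,2) (PPar (PNu yv (POut (sL,2) [yv] J)) (PIn (sL,2) [vname (S (S m))] (POut (vname (S m)) [vname (S (S m)); p0] PNil)))))).

Lemma pos_V_lam defs x m yv J : x <= m -> fst yv = sV ->
  wbarb defs (PPar (PApp [p0] (Egen x m yv J) [p0]) (Ctx x)) (On x).
Proof.
  intros Hm Hyv. destruct yv as [sy iy]. simpl in Hyv. subst sy. apply start.
  apply wbarb_beta; [reflexivity|].
  unfold Egen, Rcv, Pp, On. simpl. dec2. abs_idx.
  apply wbarb_extrude. { apply notin_idx. rewrite ?maxidx_pars_cons, ?maxidx_pars_nil. simpl. lia. }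
  simpl. apply wbarb_flat.
  pick 1. comm. alpha. apply wbarb_flat. alpha.
  pick 1. comm.
  pick 3. comm. pick 4. pick 1. comm.
  apply barb_final. simpl. intros C; repeat destruct C as [C|C]; try injection C; try lia; auto.
Qed.

Definition Egen_var x m v :=
 PNu (sL,1) (PPar (POut (sL,1) [vname x] PNil) (PIn (sL,1) [vname (S m)] (PNu (sL,2) (PPar (POut (sL,2) [vname v] PNil) (PIn (sL,2) [vname (S (S m))] (POut (vname (S m)) [vname (S (S m)); p0] PNil)))))).

Lemma pos_V_var defs x m v : x <= m -> v <= m ->
  wbarb defs (PPar (PApp [p0] (Egen_var x m v) [p0]) (Ctx x)) (On x).
Proof.
  intros Hm Hv. apply start.
  apply wbarb_beta; [reflexivity|].
  unfold Egen_var, Rcv, Pp, On. simpl. dec2. abs_idx.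
  apply wbarb_extrude. { apply notin_idx. rewrite ?maxidx_pars_cons, ?maxidx_pars_nil. simpl. lia. }
  simpl. apply wbarb_flat.
  pick 1. comm. alpha. apply wbarb_flat.
  pick 1. comm.
  pick 3. comm. pick 4. pick 1. comm.
  apply barb_final. simpl. intros C; repeat destruct C as [C|C]; try injection C; try lia; auto.
Qed.


Ltac nd := repeat constructor; simpl; intros C; repeat destruct C as [C|C]; try injection C; intros; unfold sL, sV in *; try lia; auto.

Lemma ws_encV' ob defs : ob sV = [sV; sL] -> ob sL = [sV] ->
  forall M p, sort_of p = sL -> well_sorted ob defs (encV' M p).
Proof.
  intros H1 H2. induction M; intros p Hp; simpl; unfold sort_of in *; simpl; rewrite ?Hp, ?H1, ?H2;
    repeat split; auto; try nd.
Qed.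

Lemma ws_encV ob defs : ob sV = [sV; sL] -> ob sL = [sV] ->
  forall M p, sort_of p = sL -> well_sorted ob defs (encV M p).
Proof.
  intros H1 H2. induction M; intros p Hp; simpl; unfold sort_of in *; simpl; rewrite ?Hp, ?H1, ?H2;
    repeat split; auto; try nd.
Qed.

Lemma ws_ctx ob defs x : ob sV = [sV; sL] -> ob sL = [sV] -> well_sorted ob defs (Ctx x).
Proof.
  intros H1 H2. unfold Ctx, Rcv, Pp, On. simpl. unfold sort_of; simpl. rewrite ?H1, ?H2.
  repeat split; auto; nd.
Qed.

Lemma Gm_On x : Gm x (On x) = 0.
Proof. unfold Gm, On. dec; auto. Qed.

Lemma ws_fill ob defs x P : ob sV = [sV; sL] -> ob sL = [sV] -> well_sorted ob defs P ->
  well_sorted ob defs (PPar (PApp [p0] P [p0]) (Ctx x)).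
Proof.
  intros H1 H2 H. split; [|apply ws_ctx; auto]. simpl. split; [nd|auto].
Qed.

Lemma shape' x V : is_value V -> exists yv J, fst yv = sV /\ x <= Nat.max x (maxvar V) /\
  encV' (App (Var x) V) p0 = Egen' x (Nat.max x (maxvar V)) yv J.
Proof.
  intros HV. destruct V; simpl in HV; try tauto.
  - do 2 eexists. split; [|split; [lia|reflexivity]]. reflexivity.
  - do 2 eexists. split; [|split; [lia|reflexivity]]. reflexivity.
Qed.

Lemma pos_V x V defs : is_value V ->
  wbarb defs (PPar (PApp [p0] (encV (App (Var x) V) p0) [p0]) (Ctx x)) (On x).
Proof.
  intros HV. destruct V as [v|v M|]; simpl in HV; try tauto.
  - change (encV (App (Var x) (Var v)) p0) with (Egen_var x (Nat.max x v) v).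
    apply pos_V_var; lia.
  - change (encV (App (Var x) (Lam v M)) p0) with
      (Egen x (Nat.max x (maxvar (Lam v M))) (vname (S (maxvar (Lam v M))))
         (PRep (vname (S (maxvar (Lam v M)))) [vname v; (sL, 3)] (encV M (sL, 3)))).
    apply pos_V_lam; [lia|reflexivity].
Qed.

Theorem proposition3p1 :
  forall (ob : nat -> list nat) (defs : const_env),
    ob sV = [sV; sL] -> ob sL = [sV] -> defs_ok ob defs ->
    forall (V : term) (x : nat), is_value V ->
      ~ barbed_congruent ob defs (encV'abs (App Iterm (App (Var x) V)))
                                 (encV'abs (App (Var x) V)) /\
      ~ barbed_congruent ob defs (encVabs (App Iterm (App (Var x) V)))
                                 (encVabs (App (Var x) V)).
Proof.
  intros ob defs H1 H2 Hd V x HV. split; intros Hc.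
  - assert (W1 : well_sorted ob defs (fill (CC x) (encV'abs (App Iterm (App (Var x) V))))).
    { apply ws_fill; auto; apply ws_encV'; auto. }
    assert (W2 : well_sorted ob defs (fill (CC x) (encV'abs (App (Var x) V)))).
    { apply ws_fill; auto; apply ws_encV'; auto. }
    destruct (Hc (CC x) W1 W2) as [Rel [[_ Hb] HR]].
    destruct (Hb _ _ HR) as [_ Hbb].
    apply (no_wbarb tbl_a ob defs (Gm x) _ (On x) Hd (typ_I' tbl_a defs x V eq_refl HV) (Gm_On x)).
    apply Hbb. destruct (shape' x V HV) as [yv [J [Hy [Hm HE]]]].
    change (wbarb defs (PPar (PApp [p0] (encV' (App (Var x) V) p0) [p0]) (Ctx x)) (On x)).
    rewrite HE. apply pos_V'; auto.
  - assert (W1 : well_sorted ob defs (fill (CC x) (encVabs (App Iterm (App (Var x) V))))).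
    { apply ws_fill; auto; apply ws_encV; auto. }
    assert (W2 : well_sorted ob defs (fill (CC x) (encVabs (App (Var x) V)))).
    { apply ws_fill; auto; apply ws_encV; auto. }
    destruct (Hc (CC x) W1 W2) as [Rel [[_ Hb] HR]].
    destruct (Hb _ _ HR) as [_ Hbb].
    apply (no_wbarb (tbl_for x V) ob defs (Gm x) _ (On x) Hd (typ_I defs x V HV) (Gm_On x)).
    apply Hbb. change (wbarb defs (PPar (PApp [p0] (encV (App (Var x) V) p0) [p0]) (Ctx x)) (On x)).
    apply pos_V; auto.
Qed.
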